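(* Let $(G,v)$ be a Hamel space over an ordered field $C$ and let $P\subseteq G$ be a downward closed subset of $(G,<_0)$. Then there are an extension $(G',v')$ of $(G,v)$ and an element $h\in G'$ such that (1) $h=v'(h)$; (2) $P<_0h<_0G\setminus P$; and (3) for any embedding of Hamel spaces $i:(G,v)\to(G^*,v^* )$ and any $h^*\in G^*$ with $i(P)<_0h^*=v^*(h^* )<_0 i(G\setminus P)$, there is an extension of $i$ to an embedding $(G',v')\to(G^*,v^* )$ sending $h$ to $h^*$.
   Context: Let $C$ be an ordered field. A $2$-ordered $C$-vector space is a $C$-vector space $G$ with two total orderings $<_0,<_1$ such that $G$ is an ordered $C$-vector space with respect to each. Put $G_\infty=G\cup\{\infty\}$, with $G<_0\infty$, $G<_1\infty$. A Hamel valuation on $G$ is a map $v:G\to G_\infty$ such that for all $x,y\in G$ and $\lambda\in C^{\times}$: $v(x)=\infty$ iff $x=0$; $v(x+y)\ge_0\min_0(v(x),v(y))$; $v(\lambda x)=v(x)$; if $0<_1x<_1y$ then $v(x)\ge_0v(y)$; $v(v(x))=v(x)$ (with $v(\infty)=\infty$); and $v(x)>_10$. A Hamel space is such a pair $(G,v)$. $(G',v')$ is an extension of $(G,v)$ if $G$ is a $C$-subspace of $G'$, both orderings on $G$ are restrictions of those on $G'$, and $v'(x)=v(x)$ for $x\in G$. An embedding $i:(G,v)\to(G',v')$ is an injective $C$-linear map preserving $<_0$ and $<_1$ with $i(v(x))=v'(i(x))$ for all $x\in G$ (and $i(\infty)=\infty$). *)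

(* Defs.v *)
From HB Require Import structures.
From mathcomp Require Import all_boot all_order all_algebra.
Set Implicit Arguments. Unset Strict Implicit. Unset Printing Implicit Defensive.
Import Order.TTheory GRing.Theory Num.Theory.
Local Open Scope ring_scope.

(* G_infty = option G, with None playing the role of infinity. *)

Section Hamel.
Variable C : realFieldType.

Definition ordered_vspace (V : lmodType C) (lt : V -> V -> Prop) : Prop :=
  [/\ (forall x, ~ lt x x),
      (forall x y z, lt x y -> lt y z -> lt x z),
      (forall x y, x <> y -> lt x y \/ lt y x),
      (forall x y z, lt x y -> lt (x + z) (y + z)) &
      (forall (a : C) x, 0 < a -> lt 0 x -> lt 0 (a *: x))].

Definition ltinf (V : Type) (lt : V -> V -> Prop) (a b : option V) : Prop :=
  match a, b with
  | Some a', Some b' => lt a' b'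
  | Some _, None => True
  | None, _ => False
  end.

Definition leinf (V : Type) (lt : V -> V -> Prop) (a b : option V) : Prop :=
  a = b \/ ltinf lt a b.

Definition vinf (V : Type) (v : V -> option V) (a : option V) : option V :=
  match a with Some x => v x | None => None end.

Definition is_hamel (V : lmodType C) (lt0 lt1 : V -> V -> Prop)
    (v : V -> option V) : Prop :=
  ordered_vspace lt0 /\ ordered_vspace lt1 /\
  (forall x, v x = None <-> x = 0) /\
  (forall x y, leinf lt0 (v x) (v (x + y)) \/ leinf lt0 (v y) (v (x + y))) /\
  (forall (a : C) x, a != 0 -> v (a *: x) = v x) /\
  (forall x y, lt1 0 x -> lt1 x y -> leinf lt0 (v y) (v x)) /\
  (forall x, vinf v (v x) = v x) /\
  (forall x, ltinf lt1 (Some 0) (v x)).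

Definition hamel_embedding (V W : lmodType C)
    (lt0 lt1 : V -> V -> Prop) (v : V -> option V)
    (mu0 mu1 : W -> W -> Prop) (w : W -> option W) (i : V -> W) : Prop :=
  [/\ (forall (a : C) x y, i (a *: x + y) = a *: i x + i y),
      injective i,
      (forall x y, lt0 x y -> mu0 (i x) (i y)),
      (forall x y, lt1 x y -> mu1 (i x) (i y)) &
      (forall x, omap i (v x) = w (i x))].

End Hamel.

(* Main.v *)
From HB Require Import structures.
From mathcomp Require Import all_boot all_order all_algebra.
From Stdlib Require Import Classical ClassicalEpsilon.
Require Import Defs.
Set Implicit Arguments. Unset Strict Implicit. Unset Printing Implicit Defensive.
Import Order.TTheory GRing.Theory Num.Theory.
Local Open Scope ring_scope.

Section OV.
Variables (C : realFieldType) (V : lmodType C) (lt : V -> V -> Prop).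
Hypothesis H : ordered_vspace lt.

Lemma ov_irr x : ~ lt x x. Proof. by case: H. Qed.
Lemma ov_trans x y z : lt x y -> lt y z -> lt x z.
Proof. by case: H => _ t _ _ _; apply: t. Qed.
Lemma ov_tot x y : x <> y -> lt x y \/ lt y x.
Proof. by case: H => _ _ t _ _; apply: t. Qed.
Lemma ov_add x y z : lt x y -> lt (x + z) (y + z).
Proof. by case: H => _ _ _ t _; apply: t. Qed.
Lemma ov_scale (a : C) x : 0 < a -> lt 0 x -> lt 0 (a *: x).
Proof. by case: H => _ _ _ _ t; apply: t. Qed.
Lemma ov_asym x y : lt x y -> ~ lt y x.
Proof. by move=> h1 h2; apply: (ov_irr (ov_trans h1 h2)). Qed.
Lemma ov_trich x y : x = y \/ lt x y \/ lt y x.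
Proof. case: (classic (x = y)) => [->|/ov_tot]; tauto. Qed.
Lemma ov_sub x y : lt x y <-> lt 0 (y - x).
Proof.
split=> h; first by have := ov_add (- x) h; rewrite subrr.
by have := ov_add x h; rewrite add0r subrK.
Qed.
Lemma ov_pos_add a b : lt 0 a -> lt 0 b -> lt 0 (a + b).
Proof. by move=> ha hb; have := ov_add b ha; rewrite add0r; apply: ov_trans. Qed.
Lemma ov_neg x : lt x 0 <-> lt 0 (- x).
Proof. by rewrite ov_sub sub0r. Qed.
Lemma ov_scale_lt (a : C) x y : 0 < a -> lt x y -> lt (a *: x) (a *: y).
Proof. by move=> ha /ov_sub h; rewrite ov_sub -scalerBr; apply: ov_scale. Qed.
Lemma ov_scale_ltN (a : C) x y : a < 0 -> lt x y -> lt (a *: y) (a *: x).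
Proof.
move=> ha /ov_sub h; rewrite ov_sub.
have := ov_scale (a := - a) _ h; rewrite oppr_gt0 => /(_ ha).
by rewrite scaleNr scalerBr opprB.
Qed.
Definition le0 x y := x = y \/ lt x y.
Lemma le_lt_trans x y z : le0 x y -> lt y z -> lt x z.
Proof. by case=> [->//|]; apply: ov_trans. Qed.
Lemma lt_le_trans x y z : lt x y -> le0 y z -> lt x z.
Proof. by move=> h [<-//|]; apply: ov_trans. Qed.
Lemma le_add x y z : le0 x y -> le0 (x + z) (y + z).
Proof. by case=> [->|h]; [left|right; apply: ov_add]. Qed.
Lemma le_sub x y : le0 x y <-> le0 0 (y - x).
Proof.
rewrite /le0 ov_sub; split; case=> h; try tauto.
- by left; rewrite h subrr.
- by left; apply/eqP; rewrite eq_sym -subr_eq0 -h.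
Qed.

Lemma li_irr a : ~ ltinf lt a a.
Proof. by case: a => //= x; apply: ov_irr. Qed.
Lemma li_trans a b c : ltinf lt a b -> ltinf lt b c -> ltinf lt a c.
Proof. by case: a; case: b; case: c => //= x y z; apply: ov_trans. Qed.
Lemma li_tot a b : a <> b -> ltinf lt a b \/ ltinf lt b a.
Proof.
case: a; case: b => //=; try tauto.
by move=> x y hxy; apply: ov_tot => hh; apply: hxy; rewrite hh.
Qed.
Lemma li_asym a b : ltinf lt a b -> ~ ltinf lt b a.
Proof. by move=> h1 h2; apply: (li_irr (li_trans h1 h2)). Qed.
Lemma lei_refl a : leinf lt a a. Proof. by left. Qed.
Lemma lei_lt_trans a b c : leinf lt a b -> ltinf lt b c -> ltinf lt a c.
Proof. by case=> [->//|]; apply: li_trans. Qed.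
Lemma lt_lei_trans a b c : ltinf lt a b -> leinf lt b c -> ltinf lt a c.
Proof. by move=> h [<-//|]; apply: li_trans. Qed.
Lemma lei_trans a b c : leinf lt a b -> leinf lt b c -> leinf lt a c.
Proof. by case=> [->//|h1] [<-|h2]; right => //; apply: li_trans h2. Qed.
Lemma lei_antisym a b : leinf lt a b -> leinf lt b a -> a = b.
Proof. by case=> // h [//|h']; case: (li_asym h h'). Qed.
Lemma lei_nlt a b : leinf lt a b -> ~ ltinf lt b a.
Proof. by case=> [->|h]; [apply: li_irr|apply: li_asym]. Qed.
Lemma nlei_lt a b : ~ leinf lt a b -> ltinf lt b a.
Proof.
move=> h; case: (classic (a = b)) => [e|/li_tot]; first by case: h; left.
by case=> // h'; case: h; right.
Qed.
End OV.

Section Cone.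
Variables (C : realFieldType) (V : lmodType C) (pos : V -> Prop).
Hypotheses (p0 : ~ pos 0) (padd : forall a b, pos a -> pos b -> pos (a + b))
  (ptot : forall x, x <> 0 -> pos x \/ pos (- x))
  (pscale : forall (a : C) x, 0 < a -> pos x -> pos (a *: x)).
Lemma cone_ov : ordered_vspace (fun x y => pos (y - x)).
Proof.
split.
- by move=> x; rewrite subrr.
- by move=> x y z hxy hyz; have := padd hyz hxy; rewrite addrA subrK.
- move=> x y hxy; rewrite -[x - y]opprB; apply: ptot => /eqP.
  by rewrite subr_eq0 => /eqP e; apply: hxy.
- by move=> x y z; rewrite opprD addrACA subrr addr0.
- by move=> a x ha; rewrite !subr0; apply: pscale.
Qed.
End Cone.
Section HamelLemmas.
Variables (C : realFieldType) (V : lmodType C) (lt0 lt1 : V -> V -> Prop)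
  (v : V -> option V).
Hypothesis hH : is_hamel lt0 lt1 v.

Lemma hov0 : ordered_vspace lt0. Proof. by case: hH. Qed.
Lemma hov1 : ordered_vspace lt1. Proof. by case: hH => _ []. Qed.
Lemma hv0 x : v x = None <-> x = 0. Proof. by case: hH => _ [_ [h _]]. Qed.
Lemma hvum x y : leinf lt0 (v x) (v (x + y)) \/ leinf lt0 (v y) (v (x + y)).
Proof. by case: hH => _ [_ [_ [h _]]]. Qed.
Lemma hvs (a : C) x : a != 0 -> v (a *: x) = v x.
Proof. by case: hH => _ [_ [_ [_ [h _]]]]; apply: h. Qed.
Lemma hvmono x y : lt1 0 x -> lt1 x y -> leinf lt0 (v y) (v x).
Proof. by case: hH => _ [_ [_ [_ [_ [h _]]]]]; apply: h. Qed.
Lemma hvid x : vinf v (v x) = v x.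
Proof. by case: hH => _ [_ [_ [_ [_ [_ [h _]]]]]]. Qed.
Lemma hvpos x : ltinf lt1 (Some 0) (v x).
Proof. by case: hH => _ [_ [_ [_ [_ [_ [_ h]]]]]]. Qed.
Lemma hvN x : v (- x) = v x.
Proof. by rewrite -scaleN1r hvs // oppr_eq0 oner_eq0. Qed.
Lemma hvSome x w : v x = Some w -> v w = Some w.
Proof. by move=> e; have := hvid x; rewrite e. Qed.

Lemma hL2 a b : ltinf lt0 (v a) (v b) -> v (a + b) = v a.
Proof.
move=> h.
have ab := hvum a b.
have a' := hvum (a + b) (- b); rewrite addrK hvN in a'.
case: a' => [sa|ba]; last by case: (lei_nlt hov0 ba h).
case: ab => [as'|bs]; first by apply: (lei_antisym hov0 sa as').
by case: (lei_nlt hov0 (lei_trans hov0 bs sa) h).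
Qed.

Lemma hL1 a b : lt1 0 a -> ltinf lt0 (v a) (v b) -> lt1 0 (a + b).
Proof.
move=> ha hab.
case: (ov_trich hov1 (a + b) 0) => [e|[h|//]].
  have eb : b = - a by apply/eqP; rewrite -subr_eq0 opprK addrC e.
  by rewrite eb hvN in hab; case: (li_irr hov0 hab).
have := ov_add hov1 (- b) h; rewrite addrK sub0r => h'.
by have := hvmono ha h'; rewrite hvN => hh; case: (lei_nlt hov0 hh hab).
Qed.
End HamelLemmas.
Section Construction.
Variables (C : realFieldType) (G : lmodType C) (lt0 lt1 : G -> G -> Prop)
  (v : G -> option G).
Hypothesis hH : is_hamel lt0 lt1 v.
Variable P : G -> Prop.
Hypothesis Pdown : forall x y, P y -> lt0 x y -> P x.

Let o0 := hov0 hH.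
Let o1 := hov1 hH.

Definition big g := exists w, v g = Some w /\ P w.

Lemma P_lt a b : P a -> ~ P b -> lt0 a b.
Proof.
move=> pa nb; case: (ov_trich o0 a b) => [e|[//|h]].
  by case: nb; rewrite -e.
by case: nb; apply: Pdown pa h.
Qed.

Lemma le_P a u : leinf lt0 a (Some u) -> P u -> exists w, a = Some w /\ P w.
Proof.
case=> [->|]; first by exists u.
by case: a => //= w h pu; exists w; split => //; apply: Pdown pu h.
Qed.

Lemma notbig_lt g w : ~ big g -> P w -> ltinf lt0 (Some w) (v g).
Proof.
case E: (v g) => [u|//] nb pw /=; apply: P_lt => // pu; apply: nb.
by exists u.
Qed.

Lemma big0 : ~ big 0.
Proof. by case=> w []; rewrite (proj2 (hv0 hH 0)). Qed.

Lemma big_neq0 g : big g -> g <> 0.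
Proof. by move=> b e; apply: big0; rewrite -e. Qed.

Lemma big_scale (a : C) g : a != 0 -> big (a *: g) <-> big g.
Proof. by move=> a0; rewrite /big (hvs hH). Qed.

Lemma big_opp g : big (- g) <-> big g.
Proof. by rewrite /big (hvN hH). Qed.

Lemma small_add g g' : ~ big g -> ~ big g' -> ~ big (g + g').
Proof.
move=> ng ng' [u [hu pu]].
case: (hvum hH g g'); rewrite hu => /le_P /(_ pu) [w [hw pw]];
  [apply: ng | apply: ng']; by exists w.
Qed.

Lemma big_add_small g s : big g -> ~ big s -> v (g + s) = v g.
Proof.
move=> [w [hw pw]] ns; apply: (hL2 hH); rewrite hw; exact: notbig_lt.
Qed.

Lemma big_add_small' g s : big g -> ~ big s -> big (g + s).
Proof. by move=> bg ns; rewrite /big big_add_small. Qed.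

Lemma mono_big a b : lt1 0 a -> lt1 a b -> big a -> big b.
Proof.
move=> h1 h2 [w [hw pw]]; have := hvmono hH h1 h2; rewrite hw.
by move=> /le_P /(_ pw).
Qed.

Lemma big_pos_add g s : lt1 0 g -> big g -> ~ big s -> lt1 0 (g + s).
Proof.
move=> h1 [w [hw pw]] ns; apply: (hL1 hH) => //; rewrite hw; exact: notbig_lt.
Qed.

Definition G' : lmodType C := (G * C^o)%type.
Lemma G'Z (a : C) (x : G') : a *: x = (a *: x.1, a * x.2).
Proof. by case: x. Qed.
Lemma G'D (x y : G') : x + y = (x.1 + y.1, x.2 + y.2).
Proof. by case: x; case: y. Qed.
Lemma G'N (x : G') : - x = (- x.1, - x.2). Proof. by []. Qed.
Lemma G'0 : (0 : G') = (0, 0). Proof. by []. Qed.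
Lemma G'B (x y : G') : x - y = (x.1 - y.1, x.2 - y.2).
Proof. by rewrite G'D. Qed.

Notation le0g := (le0 lt0).

Definition pos0 (x : G') : Prop :=
  (x.2 = 0 /\ lt0 0 x.1) \/
  (0 < x.2 /\ exists p, P p /\ le0g 0 (x.1 + x.2 *: p)) \/
  (x.2 < 0 /\ exists q, ~ P q /\ le0g 0 (x.1 + x.2 *: q)).

Lemma le0_add a b : le0g 0 a -> le0g 0 b -> le0g 0 (a + b).
Proof.
case=> [<-|ha]; first by rewrite add0r.
case=> [<-|hb]; first by rewrite addr0; right.
by right; apply: ov_pos_add.
Qed.
Lemma lt_le0_add a b : lt0 0 a -> le0g 0 b -> lt0 0 (a + b).
Proof.
by move=> ha [<-|hb]; [rewrite addr0 | apply: ov_pos_add].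
Qed.

Lemma comb (g g' t : G) (l m : C) :
  (g + l *: t) + (g' + m *: t) = (g + g') + (l + m) *: t.
Proof. by rewrite addrACA scalerDl. Qed.

Lemma shift_pos g (l : C) a b : 0 < l -> lt0 a b -> lt0 (g + l *: a) (g + l *: b).
Proof. by move=> hl h; rewrite ![g + _]addrC; apply: ov_add => //; apply: ov_scale_lt. Qed.
Lemma shift_neg g (l : C) a b : l < 0 -> lt0 a b -> lt0 (g + l *: b) (g + l *: a).
Proof. by move=> hl h; rewrite ![g + _]addrC; apply: ov_add => //; apply: ov_scale_ltN. Qed.

Lemma shift_lt g (l : C) a b : 0 < l -> le0g 0 (g + l *: a) -> lt0 a b ->
  lt0 0 (g + l *: b).
Proof. by move=> hl h1 h2; apply: (le_lt_trans o0 h1); apply: shift_pos. Qed.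
Lemma shift_ltN g (l : C) a b : l < 0 -> le0g 0 (g + l *: b) -> lt0 a b ->
  lt0 0 (g + l *: a).
Proof. by move=> hl h1 h2; apply: (le_lt_trans o0 h1); apply: shift_neg. Qed.
Lemma shift_le g (l : C) a b : 0 < l -> le0g 0 (g + l *: a) -> le0g a b ->
  le0g 0 (g + l *: b).
Proof. by move=> hl h1 [<-//|h2]; right; apply: shift_lt h1 h2. Qed.
Lemma shift_leN g (l : C) a b : l < 0 -> le0g 0 (g + l *: b) -> le0g a b ->
  le0g 0 (g + l *: a).
Proof. by move=> hl h1 [->//|h2]; right; apply: shift_ltN h1 h2. Qed.

Lemma pos0_zero g g' (m : C) : lt0 0 g -> pos0 (g', m) -> pos0 (g + g', 0 + m).
Proof.
rewrite /pos0 /= add0r => hg [[-> h]|[[hm [p [pp h]]]|[hm [q [pq h]]]]].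
- by left; split => //; apply: ov_pos_add.
- right; left; split => //; exists p; split => //; right.
  by rewrite -addrA; apply: lt_le0_add.
- right; right; split => //; exists q; split => //; right.
  by rewrite -addrA; apply: lt_le0_add.
Qed.

Lemma pos0_mixed g (l : C) p g' m q : 0 < l -> P p -> le0g 0 (g + l *: p) ->
  m < 0 -> ~ P q -> le0g 0 (g' + m *: q) -> pos0 (g + g', l + m).
Proof.
move=> hl pp h1 hm pq h2; have pq' := P_lt pp pq.
rewrite /pos0 /=.
have h3 := shift_ltN hm h2 pq'.
have [lm|lm|lm] := ltgtP (l + m) 0.
- right; right; split => //; exists q; split => //; right.
  rewrite -comb; apply: lt_le0_add => //; exact: shift_lt h1 pq'.
- right; left; split => //; exists p; split => //; right.
  rewrite -comb addrC; apply: lt_le0_add => //.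
- left; split => //.
  have := comb g g' p l m; rewrite lm scale0r addr0 => <-.
  by rewrite addrC; apply: lt_le0_add.
Qed.

Lemma pos0_add x y : pos0 x -> pos0 y -> pos0 (x + y).
Proof.
case: x => g l; case: y => g' m; rewrite G'D /=.
move=> hx hy.
case: (hx) => [[/= l0 hg]|[[/= hl [p [pp h1]]]|[/= hl [q [pq h1]]]]].
- by rewrite l0; apply: pos0_zero.
- case: (hy) => [[/= m0 hg']|[[/= hm [p' [pp' h2]]]|[/= hm [q' [pq' h2]]]]].
  + by rewrite m0 addrC [l + _]addrC; apply: pos0_zero.
  + right; left; split; first by apply: addr_gt0.
    case: (ov_trich o0 p p') => [e|[lt|lt]].
    * exists p'; split => //; rewrite -comb; apply: le0_add => //.
      by rewrite -e.
    * exists p'; split => //; rewrite -comb; apply: le0_add => //.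
      by right; apply: shift_lt h1 lt.
    * exists p; split => //; rewrite -comb; apply: le0_add => //.
      by right; apply: shift_lt h2 lt.
  + exact: pos0_mixed h1 hm pq' h2.
- case: (hy) => [[/= m0 hg']|[[/= hm [p' [pp' h2]]]|[/= hm [q' [pq' h2]]]]].
  + by rewrite m0 addrC [l + _]addrC; apply: pos0_zero.
  + by rewrite addrC [l + _]addrC; apply: pos0_mixed h2 hl pq h1.
  + right; right; split; first by rewrite -oppr_gt0 opprD addr_gt0 // oppr_gt0.
    case: (ov_trich o0 q q') => [e|[lt|lt]].
    * exists q'; split => //; rewrite -comb; apply: le0_add => //.
      by rewrite -e.
    * exists q; split => //; rewrite -comb; apply: le0_add => //.
      by right; apply: shift_ltN h2 lt.
    * exists q'; split => //; rewrite -comb; apply: le0_add => //.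
      by right; apply: shift_ltN h1 lt.
Qed.
Lemma pos0_0 : ~ pos0 0.
Proof.
rewrite /pos0 /= => [[[_ h]|[[h _]|[h _]]]]; first exact: (ov_irr o0 h);
  by rewrite ltxx in h.
Qed.

Lemma cancel_t (g : G) (l : C) : l != 0 -> g + l *: (- (l^-1 *: g)) = 0.
Proof. by move=> l0; rewrite scalerN scalerA mulfV // scale1r subrr. Qed.

Lemma pos0_tot x : x <> 0 -> pos0 x \/ pos0 (- x).
Proof.
case: x => g l; rewrite G'N /pos0 /= => nz.
have [l0|l0|l0] := ltgtP l 0.
- set t := - (l^-1 *: g).
  have ct : g + l *: t = 0 by apply: cancel_t; rewrite lt_eqF.
  case: (classic (P t)) => pt.
  + right; right; left; split; first by rewrite oppr_gt0.
    exists t; split => //; left.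
    by rewrite scaleNr -opprD ct oppr0.
  + left; right; right; split => //; exists t; split => //; left; by rewrite ct.
- set t := - (l^-1 *: g).
  have ct : g + l *: t = 0 by apply: cancel_t; rewrite gt_eqF.
  case: (classic (P t)) => pt.
  + left; right; left; split => //; exists t; split => //; left; by rewrite ct.
  + right; right; right; split; first by rewrite oppr_lt0.
    exists t; split => //; left.
    by rewrite scaleNr -opprD ct oppr0.
- subst l.
  have g0 : g <> 0 by move=> e; apply: nz; rewrite e.
  case: (ov_tot o0 (x := 0) (y := g)) => [e|h|h]; first by apply: g0.
  + by left; left.
  + by right; left; rewrite oppr0; split => //; rewrite -ov_neg.
Qed.

Lemma pos0_scale (a : C) x : 0 < a -> pos0 x -> pos0 (a *: x).
Proof.
case: x => g l; rewrite G'Z /pos0 /= => ha.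
case=> [[-> h]|[[hl [p [pp h]]]|[hl [q [pq h]]]]].
- by left; rewrite mulr0; split => //; apply: ov_scale.
- right; left; split; first by apply: mulr_gt0.
  exists p; split => //; rewrite -scalerA -scalerDr.
  case: h => [<-|h]; [by left; rewrite scaler0 | by right; apply: ov_scale].
- right; right; split; first by rewrite pmulr_rlt0.
  exists q; split => //; rewrite -scalerA -scalerDr.
  case: h => [<-|h]; [by left; rewrite scaler0 | by right; apply: ov_scale].
Qed.

Definition lt0' (x y : G') := pos0 (y - x).
Lemma ov0' : ordered_vspace lt0'.
Proof. apply: cone_ov; [exact: pos0_0|exact: pos0_add|exact: pos0_tot|exact: pos0_scale]. Qed.

Definition jj (g : G) : G' := (g, 0).
Definition hh : G' := (0, 1).

Lemma ltj a b : lt0' (jj a) (jj b) <-> lt0 a b.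
Proof.
rewrite /lt0' /jj G'B /pos0 /= subrr (ov_sub o0 a b); split.
- by case=> [[_ //]|[[h _]|[h _]]]; rewrite ltxx in h.
- by move=> h; left.
Qed.

Lemma ltjh a : lt0' (jj a) hh <-> P a.
Proof.
rewrite /lt0' /jj /hh G'B /pos0 /= subr0 sub0r; split.
- case=> [[h _]|[[_ [p [pp h]]]|[h _]]].
  + by move/eqP: h; rewrite oner_eq0.
  + rewrite scale1r addrC -(le_sub o0) in h.
    by case: h => [->//|h]; apply: Pdown pp h.
  + by rewrite ltr10 in h.
- move=> pa; right; left; split => //; exists a; split => //; left.
  by rewrite scale1r addNr.
Qed.

Lemma lthj a : lt0' hh (jj a) <-> ~ P a.
Proof.
rewrite /lt0' /jj /hh G'B /pos0 /= subr0 sub0r; split.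
- case=> [[h _]|[[h _]|[_ [q [pq h]]]]].
  + by move/eqP: h; rewrite oppr_eq0 oner_eq0.
  + by rewrite oppr_gt0 ltr10 in h.
  + rewrite scaleN1r -(le_sub o0) in h.
    by case: h => [<-//|h] pa; apply: pq; apply: Pdown pa h.
- move=> pa; right; right; split; first by rewrite oppr_lt0.
  exists a; split => //; left.
  by rewrite scaleN1r subrr.
Qed.
Definition pos1 (x : G') : Prop :=
  ((x.2 = 0 \/ big x.1) /\ lt1 0 x.1) \/ (~ big x.1 /\ 0 < x.2).

Lemma pos1_0 : ~ pos1 0.
Proof.
rewrite /pos1 /= => [[[_ h]|[_ h]]]; first exact: (ov_irr o1 h).
by rewrite ltxx in h.
Qed.

Lemma pos1_add1 g l g' m : (l = 0 \/ big g) -> lt1 0 g -> pos1 (g', m) ->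
  pos1 (g + g', l + m).
Proof.
rewrite /pos1 /= => hb hg [[hb' hg']|[nb' hm]].
- left; split; last by apply: ov_pos_add.
  case: hb => [l0|bg].
    case: hb' => [m0|bg']; first by left; rewrite l0 m0 addr0.
    right; apply: (mono_big hg') => //.
    by have := ov_add o1 g' hg; rewrite add0r.
  right; apply: (mono_big hg) => //.
  by have := ov_add o1 g hg'; rewrite add0r addrC.
- case: (classic (big g)) => bg.
    left; split; first by right; apply: big_add_small'.
    exact: big_pos_add.
  case: hb => [l0|//]; right; split; first exact: small_add.
  by rewrite l0 add0r.
Qed.

Lemma pos1_add x y : pos1 x -> pos1 y -> pos1 (x + y).
Proof.
case: x => g l; case: y => g' m; rewrite G'D /=.
move=> hx hy; case: (hx) => [[/= hb hg]|[/= nb hl]].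
  exact: pos1_add1.
case: (hy) => [[/= hb' hg']|[/= nb' hm]].
  by rewrite addrC [l + _]addrC; apply: pos1_add1.
by right; split; [apply: small_add | apply: addr_gt0].
Qed.

Lemma pos1_tot x : x <> 0 -> pos1 x \/ pos1 (- x).
Proof.
case: x => g l; rewrite G'N /pos1 /= => nz.
case: (classic (big g)) => bg.
  have g0 : (0 : G) <> g by move=> e; apply: (big_neq0 bg); rewrite e.
  case: (ov_tot o1 g0) => h.
  - by left; left; split => //; right.
  - by right; left; split; [right; rewrite big_opp | rewrite -ov_neg].
have [l0|l0|l0] := ltgtP l 0.
- by right; right; split; [rewrite big_opp | rewrite oppr_gt0].
- by left; right.
- subst l.
  have g0 : (0 : G) <> g by move=> e; apply: nz; rewrite -e.
  case: (ov_tot o1 g0) => h.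
  + by left; left; split => //; left.
  + by right; left; split; [left; rewrite oppr0 | rewrite -ov_neg].
Qed.

Lemma pos1_scale (a : C) x : 0 < a -> pos1 x -> pos1 (a *: x).
Proof.
case: x => g l; rewrite G'Z /pos1 /= => ha.
have a0 : a != 0 by rewrite gt_eqF.
case=> [[hb hg]|[nb hl]].
- left; split; last by apply: ov_scale.
  case: hb => [->|bg]; [by left; rewrite mulr0 | by right; rewrite big_scale].
- by right; split; [rewrite big_scale | apply: mulr_gt0].
Qed.

Definition lt1' (x y : G') := pos1 (y - x).
Lemma ov1' : ordered_vspace lt1'.
Proof. apply: cone_ov; [exact: pos1_0|exact: pos1_add|exact: pos1_tot|exact: pos1_scale]. Qed.

Definition dec (Q : Prop) : bool := if excluded_middle_informative Q then true else false.
Lemma decP (Q : Prop) : dec Q <-> Q.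
Proof. by rewrite /dec; case: excluded_middle_informative. Qed.

Definition v' (x : G') : option G' :=
  if (x.2 == 0) || dec (big x.1) then omap jj (v x.1) else Some hh.

Lemma v'E1 x : (x.2 = 0 \/ big x.1) -> v' x = omap jj (v x.1).
Proof.
rewrite /v'; case=> [->|/decP ->]; first by rewrite eqxx.
by rewrite orbT.
Qed.
Lemma v'E2 x : x.2 <> 0 -> ~ big x.1 -> v' x = Some hh.
Proof.
rewrite /v' => /eqP /negbTE -> nb.
by case: (boolP (dec (big x.1))) => // /decP.
Qed.
Lemma omap_lt a b : ltinf lt0' (omap jj a) (omap jj b) <-> ltinf lt0 a b.
Proof. by case: a => [x|]; case: b => [y|] //=; apply: ltj. Qed.

Lemma omap_le a b : leinf lt0' (omap jj a) (omap jj b) <-> leinf lt0 a b.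
Proof.
rewrite /leinf omap_lt; split; case=> h; try tauto; left.
- by case: a b h => [x|] [y|] //= [->].
- by rewrite h.
Qed.

Lemma omap_lt_h a : ltinf lt0' (omap jj a) (Some hh) <-> exists w, a = Some w /\ P w.
Proof.
case: a => [x|] /=; last by split => // [[w []]].
rewrite ltjh; split; first by exists x.
by case=> w [[->]].
Qed.

Lemma h_lt_omap a : ltinf lt0' (Some hh) (omap jj a) <-> (forall w, a = Some w -> ~ P w).
Proof.
case: a => [x|] /=; last by [].
rewrite lthj; split; first by move=> h w [<-].
by move=> h; apply: h.
Qed.

Lemma nbig_h g : ~ big g -> ltinf lt0' (Some hh) (omap jj (v g)).
Proof. by move=> nb; apply/h_lt_omap => w e pw; apply: nb; exists w. Qed.

Lemma v'_none x : v' x = None <-> x = 0.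
Proof.
case: x => g l; rewrite G'0.
case: (classic (l = 0 \/ big g)) => c.
  rewrite v'E1 //=; case E: (v g) => [w|] /=.
    split => // [[eg el]].
    by move: E; rewrite eg (proj2 (hv0 hH 0)).
  move/(hv0 hH): E => eg; rewrite eg in c *; split => // _.
  by case: c => [->//|bg]; case: (big0 bg).
rewrite v'E2 /=; [|by move=> e; apply: c; left|by move=> e; apply: c; right].
by split => [//|[_ e]]; case: c; left.
Qed.

Lemma vum_aux1 g l g' m : ~ (l + m = 0 \/ big (g + g')) ->
  ltinf lt0' (v' (g + g', l + m)) (v' (g, l)) -> l = 0.
Proof.
move=> c h.
rewrite (v'E2 (x := (g + g', l + m))) /= in h;
  [|by move=> e; apply: c; left|by move=> e; apply: c; right].
case: (classic (l = 0 \/ big g)) => c'.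
  rewrite v'E1 // in h.
  case: c' => // bg; case: bg => w [e pw].
  by move/h_lt_omap: h => /(_ w e).
rewrite v'E2 /= in h; [|by move=> e; apply: c'; left|by move=> e; apply: c'; right].
by case: (ov_irr ov0' h).
Qed.

Lemma vum_aux2 g l g' m : (l + m = 0 \/ big (g + g')) ->
  leinf lt0 (v g) (v (g + g')) ->
  ~ ltinf lt0' (v' (g + g', l + m)) (v' (g, l)).
Proof.
move=> c hle h; rewrite v'E1 // in h.
case: (classic (l = 0 \/ big g)) => c'.
  rewrite v'E1 // in h; move/omap_lt: h => h.
  exact: (lei_nlt o0 hle h).
rewrite v'E2 /= in h; [|by move=> e; apply: c'; left|by move=> e; apply: c'; right].
move/omap_lt_h: h => [u [eu pu]].
rewrite eu in hle; case: (le_P hle pu) => w [ew pw].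
by apply: c'; right; exists w.
Qed.

Lemma v'_um x y : leinf lt0' (v' x) (v' (x + y)) \/ leinf lt0' (v' y) (v' (x + y)).
Proof.
case: x => g l; case: y => g' m; rewrite G'D /=.
apply: NNPP => nh.
have h1 := nlei_lt ov0' (fun e => nh (or_introl e)).
have h2 := nlei_lt ov0' (fun e => nh (or_intror e)).
case: (classic (l + m = 0 \/ big (g + g'))) => c.
  case: (hvum hH g g') => hle; first exact: (vum_aux2 c hle h1).
  have c2 : m + l = 0 \/ big (g' + g) by rewrite (addrC g' g) (addrC m l).
  rewrite (addrC g g') in hle.
  by case: (vum_aux2 c2 hle); rewrite (addrC g' g) (addrC m l).
have l0 := vum_aux1 c h1.
have c2 : ~ (m + l = 0 \/ big (g' + g)) by rewrite (addrC g' g) (addrC m l).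
have m0 : m = 0 by apply: (vum_aux1 c2); rewrite (addrC g' g) (addrC m l).
by apply: c; left; rewrite l0 m0 addr0.
Qed.

Lemma v'_scale (a : C) x : a != 0 -> v' (a *: x) = v' x.
Proof.
case: x => g l; rewrite G'Z /= => a0.
case: (classic (l = 0 \/ big g)) => c.
  rewrite !v'E1 //= ?(hvs hH) //.
  by case: c => [->|bg]; [left; rewrite mulr0 | right; rewrite big_scale].
rewrite !v'E2 //=.
- by move=> e; apply: c; left.
- by move=> e; apply: c; right.
- by apply/eqP; rewrite mulf_neq0 //; apply/eqP => e; apply: c; left.
- by rewrite big_scale // => e; apply: c; right.
Qed.

Lemma v'_mono x y : lt1' 0 x -> lt1' x y -> leinf lt0' (v' y) (v' x).
Proof.
move=> hx hxy; have hy := ov_trans ov1' hx hxy.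
rewrite /lt1' subr0 in hx hy.
case: x hx hxy => g l; case: y hy => g' m; rewrite /lt1' G'B /pos1 /= => hy hx hxy.
rewrite ?subr0 in hx hy.
case: hx => [[bx gx]|[nbx lx]]; case: hy => [[by' gy]|[nby my]].
- rewrite !v'E1 //; apply/omap_le.
  case: hxy => [[_ hd]|[nbd hd]].
    by apply: (hvmono hH gx); rewrite (ov_sub o1).
  case: (classic (big g)) => bg.
    by left; have := big_add_small bg nbd; rewrite addrC subrK.
  case: bx => // l0; subst l; rewrite subr0 in hd.
  case: by' => [m0|bg']; first by rewrite m0 ltxx in hd.
  by case: (small_add bg nbd); rewrite addrC subrK.
- rewrite (v'E1 (x := (g, l))) // (v'E2 (x := (g', m))) /=;
    [|by move=> e; rewrite e ltxx in my|by []].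
  right; apply: nbig_h => bg.
  case: hxy => [[_ hd]|[nbd _]].
    by apply: nby; apply: (mono_big gx) bg; rewrite (ov_sub o1).
  by apply: nby; have := big_add_small' bg nbd; rewrite addrC subrK.
- rewrite (v'E2 (x := (g, l))) /= ?(v'E1 (x := (g', m))) //;
    [|by move=> e; rewrite e ltxx in lx].
  right; apply/omap_lt_h.
  suff : big g' by [].
  case: by' => // m0; subst m.
  case: hxy => [[[e|bd] hd]|[_ hd]].
  + by move/eqP: e; rewrite sub0r oppr_eq0 => /eqP e; rewrite e ltxx in lx.
  + by have := big_add_small' bd nbx; rewrite subrK.
  + by rewrite sub0r oppr_gt0 ltNge ltW in hd.
- rewrite !v'E2 //=; [by left|by move=> e; rewrite e ltxx in lx|by move=> e; rewrite e ltxx in my].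
Qed.

Lemma v'_idem x : vinf v' (v' x) = v' x.
Proof.
case: (classic (x.2 = 0 \/ big x.1)) => c.
  rewrite v'E1 //; case E: (v x.1) => [w|] //=.
  by rewrite v'E1 /=; [rewrite (hvSome hH E) | left].
rewrite v'E2 /=; [|by move=> e; apply: c; left|by move=> e; apply: c; right].
rewrite v'E2 //=; try (apply/eqP; exact: oner_neq0); exact: big0.
Qed.

Lemma v'_pos x : ltinf lt1' (Some 0) (v' x).
Proof.
case: (classic (x.2 = 0 \/ big x.1)) => c.
  rewrite v'E1 //; case E: (v x.1) => [w|] //=.
  rewrite /lt1' subr0 /pos1 /=; left; split; first by left.
  by have := hvpos hH x.1; rewrite E.
rewrite v'E2 /=; [|by move=> e; apply: c; left|by move=> e; apply: c; right].
by rewrite /lt1' subr0 /pos1 /=; right; split; [exact: big0 | exact: ltr01].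
Qed.

Lemma hamel' : is_hamel lt0' lt1' v'.
Proof.
split; first exact: ov0'. split; first exact: ov1'.
split; first exact: v'_none. split; first exact: v'_um.
split; first exact: v'_scale. split; first exact: v'_mono.
split; first exact: v'_idem. exact: v'_pos.
Qed.
Lemma jj_emb : hamel_embedding lt0 lt1 v lt0' lt1' v' jj.
Proof.
split.
- by move=> a x y; rewrite /jj G'D G'Z /= mulr0 addr0.
- by move=> x y [].
- by move=> x y h; apply/ltj.
- move=> x y h; rewrite /lt1' /jj G'B /pos1 /= subrr; left; split; first by left.
  by rewrite -(ov_sub o1).
- by move=> x; rewrite v'E1 //; left.
Qed.

Lemma v'hh : v' hh = Some hh.
Proof. by rewrite v'E2 //=; [apply/eqP; exact: oner_neq0 | exact: big0]. Qed.

Section Univ.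
Variables (Gs : lmodType C) (mu0 mu1 : Gs -> Gs -> Prop) (vs : Gs -> option Gs).
Hypothesis Hs : is_hamel mu0 mu1 vs.
Variable i : G -> Gs.
Hypothesis hi : hamel_embedding lt0 lt1 v mu0 mu1 vs i.
Variable hs : Gs.
Hypotheses (hP : forall x, P x -> mu0 (i x) hs) (hvh : vs hs = Some hs)
  (hnP : forall x, ~ P x -> mu0 hs (i x)).

Let m0 := hov0 Hs.
Let m1 := hov1 Hs.

Lemma iL (a : C) x y : i (a *: x + y) = a *: i x + i y. Proof. by case: hi. Qed.
Lemma iinj : injective i. Proof. by case: hi. Qed.
Lemma ilt0 x y : lt0 x y -> mu0 (i x) (i y). Proof. by case: hi => _ _ h _ _; apply: h. Qed.
Lemma ilt1 x y : lt1 x y -> mu1 (i x) (i y). Proof. by case: hi => _ _ _ h _; apply: h. Qed.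
Lemma iv x : omap i (v x) = vs (i x). Proof. by case: hi => _ _ _ _ h; apply: h. Qed.
Lemma i0 : i 0 = 0.
Proof.
have e := iL 1 0 0; rewrite !scale1r addr0 in e.
have e2 : i 0 + 0 = i 0 + i 0 by rewrite addr0; exact: e.
exact: (esym (addrI (i 0) e2)).
Qed.
Lemma iD x y : i (x + y) = i x + i y. Proof. by have := iL 1 x y; rewrite !scale1r. Qed.
Lemma iZ (a : C) x : i (a *: x) = a *: i x. Proof. by have := iL a x 0; rewrite i0 !addr0. Qed.
Lemma iN x : i (- x) = - i x. Proof. by rewrite -scaleN1r iZ scaleN1r. Qed.

Definition i' (x : G') : Gs := i x.1 + x.2 *: hs.

Lemma i'_lin (a : C) x y : i' (a *: x + y) = a *: i' x + i' y.
Proof.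
rewrite /i' G'D G'Z /= iD iZ scalerDl scalerDr scalerA.
by rewrite -!addrA; congr (_ + _); rewrite addrCA.
Qed.
Lemma i'_sub x y : i' (y - x) = i' y - i' x.
Proof.
by have := i'_lin (-1) x y; rewrite !scaleN1r (addrC (- x)) (addrC (- i' x)).
Qed.

Lemma hs_pos : mu1 0 hs.
Proof. by have := hvpos Hs hs; rewrite hvh. Qed.

Lemma i'_ker x : i' x = 0 -> x = 0.
Proof.
case: x => g l; rewrite /i' /= => e.
case: (eqVneq l 0) => [l0|l0].
  subst l; rewrite scale0r addr0 -i0 in e.
  by rewrite (iinj e).
exfalso.
set t := - (l^-1 *: g).
have e' : l *: hs = - i g.
  by apply/eqP; rewrite -addr_eq0 addrC e.
have ht : i t = hs.
  rewrite /t iN iZ -scalerN -e' scalerA mulVf // scale1r //.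
case: (classic (P t)) => pt.
  by have := hP pt; rewrite ht; apply: (ov_irr m0).
by have := hnP pt; rewrite ht; apply: (ov_irr m0).
Qed.

Lemma i'_inj : injective i'.
Proof.
move=> x y e; apply/eqP; rewrite eq_sym -subr_eq0; apply/eqP; apply: i'_ker.
by rewrite i'_sub e subrr.
Qed.

Lemma ile0 a : le0 lt0 0 a -> le0 mu0 0 (i a).
Proof. by case=> [<-|h]; [left; rewrite i0 | right; rewrite -i0; apply: ilt0]. Qed.

Lemma gshift_pos (g : Gs) (l : C) a b : 0 < l -> mu0 a b -> mu0 (g + l *: a) (g + l *: b).
Proof. by move=> hl h; rewrite ![g + _]addrC; apply: (ov_add m0); apply: (ov_scale_lt m0). Qed.
Lemma gshift_neg (g : Gs) (l : C) a b : l < 0 -> mu0 a b -> mu0 (g + l *: b) (g + l *: a).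
Proof. by move=> hl h; rewrite ![g + _]addrC; apply: (ov_add m0); apply: (ov_scale_ltN m0). Qed.

Lemma i'_lt0 x : pos0 x -> mu0 0 (i' x).
Proof.
case: x => g l; rewrite /pos0 /i' /= => [[[-> h]|[[hl [p [pp h]]]|[hl [q [pq h]]]]]].
- by rewrite scale0r addr0 -i0; apply: ilt0.
- have := ile0 h; rewrite iD iZ => h'.
  apply: (le_lt_trans m0 h'); apply: gshift_pos => //; exact: hP.
- have := ile0 h; rewrite iD iZ => h'.
  apply: (le_lt_trans m0 h'); apply: gshift_neg => //; exact: hnP.
Qed.

Lemma vs_lhs (l : C) : l != 0 -> vs (l *: hs) = Some hs.
Proof. by move=> l0; rewrite (hvs Hs) // hvh. Qed.

Lemma i'_lt1 x : pos1 x -> mu1 0 (i' x).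
Proof.
case: x => g l; rewrite /pos1 /i' /= => [[[hb hg]|[nb hl]]].
- have hig : mu1 0 (i g) by rewrite -i0; apply: ilt1.
  case: (eqVneq l 0) => [->|l0]; first by rewrite scale0r addr0.
  case: hb => [e|[w [ew pw]]]; first by rewrite e eqxx in l0.
  apply: (hL1 Hs) => //; rewrite vs_lhs // -iv ew /=; exact: hP.
- have l0 : l != 0 by rewrite gt_eqF.
  rewrite addrC; apply: (hL1 Hs); first by apply: (ov_scale m1) => //; exact: hs_pos.
  rewrite vs_lhs // -iv; case E: (v g) => [w|] //=; apply: hnP => pw.
  by apply: nb; exists w.
Qed.

Lemma i'_v x : omap i' (v' x) = vs (i' x).
Proof.
case: x => g l; rewrite /i' /=.
case: (classic (l = 0 \/ big g)) => c.
  have -> : vs (i g + l *: hs) = omap i (v g).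
    case: (eqVneq l 0) => [->|l0]; first by rewrite scale0r addr0 iv.
    case: c => [e|[w [ew pw]]]; first by rewrite e eqxx in l0.
    rewrite (hL2 Hs) -?iv // ew vs_lhs //=; exact: hP.
  rewrite v'E1 //; case: (v g) => [w|] //=.
  by rewrite /i' /jj /= scale0r addr0.
have l0 : l != 0 by apply/eqP => e; apply: c; left.
have nb : ~ big g by move=> b; apply: c; right.
rewrite v'E2 //=; last by apply/eqP.
rewrite (addrC (i g)) (hL2 Hs).
  by rewrite vs_lhs // /i' /hh /= i0 add0r scale1r.
rewrite vs_lhs // -iv; case E: (v g) => [w|] //=; apply: hnP => pw.
by apply: nb; exists w.
Qed.

Lemma i'_emb : hamel_embedding lt0' lt1' v' mu0 mu1 vs i'.
Proof.
split.
- exact: i'_lin.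
- exact: i'_inj.
- by move=> x y h; apply/(ov_sub m0); rewrite -i'_sub; apply: i'_lt0.
- by move=> x y h; apply/(ov_sub m1); rewrite -i'_sub; apply: i'_lt1.
- exact: i'_v.
Qed.

Lemma i'_jj x : i' (jj x) = i x. Proof. by rewrite /i' /= scale0r addr0. Qed.
Lemma i'_hh : i' hh = hs. Proof. by rewrite /i' /= i0 add0r scale1r. Qed.
End Univ.
Lemma main_result :
  exists (G'' : lmodType C) (lt0'' lt1'' : G'' -> G'' -> Prop)
         (v'' : G'' -> option G'') (j : G -> G'') (h : G''),
    is_hamel lt0'' lt1'' v'' /\
    hamel_embedding lt0 lt1 v lt0'' lt1'' v'' j /\
    v'' h = Some h /\
    (forall x, P x -> lt0'' (j x) h) /\
    (forall x, ~ P x -> lt0'' h (j x)) /\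
        (forall (Gs : lmodType C) (mu0 mu1 : Gs -> Gs -> Prop)
                (vs : Gs -> option Gs),
           is_hamel mu0 mu1 vs ->
           forall (i : G -> Gs),
           hamel_embedding lt0 lt1 v mu0 mu1 vs i ->
           forall hs : Gs,
           (forall x, P x -> mu0 (i x) hs) ->
           vs hs = Some hs ->
           (forall x, ~ P x -> mu0 hs (i x)) ->
           exists i' : G'' -> Gs,
             [/\ hamel_embedding lt0'' lt1'' v'' mu0 mu1 vs i',
                 (forall x, i' (j x) = i x) &
                 i' h = hs]).
Proof.
exists G', lt0', lt1', v', jj, hh.
split; first exact: hamel'.
split; first exact: jj_emb.
split; first exact: v'hh.
split; first by move=> x px; apply/ltjh.
split; first by move=> x px; apply/lthj.
move=> Gs mu0 mu1 vs Hs i hi hs hP hvh hnP.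
exists (i' i hs); split.
- exact: i'_emb.
- exact: i'_jj.
- exact: (i'_hh hi hs).
Qed.
End Construction.

Theorem lemma4p5 (C : realFieldType) (G : lmodType C)
    (lt0 lt1 : G -> G -> Prop) (v : G -> option G) :
  is_hamel lt0 lt1 v ->
  forall P : G -> Prop,
  (forall x y, P y -> lt0 x y -> P x) ->
  exists (G' : lmodType C) (lt0' lt1' : G' -> G' -> Prop)
         (v' : G' -> option G') (j : G -> G') (h : G'),
    is_hamel lt0' lt1' v' /\
    hamel_embedding lt0 lt1 v lt0' lt1' v' j /\
    v' h = Some h /\
    (forall x, P x -> lt0' (j x) h) /\
    (forall x, ~ P x -> lt0' h (j x)) /\
        (forall (Gs : lmodType C) (mu0 mu1 : Gs -> Gs -> Prop)
                (vs : Gs -> option Gs),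
           is_hamel mu0 mu1 vs ->
           forall (i : G -> Gs),
           hamel_embedding lt0 lt1 v mu0 mu1 vs i ->
           forall hs : Gs,
           (forall x, P x -> mu0 (i x) hs) ->
           vs hs = Some hs ->
           (forall x, ~ P x -> mu0 hs (i x)) ->
           exists i' : G' -> Gs,
             [/\ hamel_embedding lt0' lt1' v' mu0 mu1 vs i',
                 (forall x, i' (j x) = i x) &
                 i' h = hs]).
Proof.
move=> hH P Pdown.
exact: (main_result hH Pdown).
Qed.
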